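(* The principal branch $W$ of Lambert's W function, restricted to $(0,\infty)$, is a complete Bernstein function.
   Context: $W$ is the principal branch of Lambert's W function: the holomorphic function on $\mathbb{C}\setminus(-\infty,-1/e]$ satisfying $W(z)e^{W(z)}=z$ with $W(z)=\sum_{n\ge1}(-n)^{n-1}z^n/n!$ near $0$. A $C^\infty$ function $g:(0,\infty)\to\mathbb{R}$ is completely monotonic if $(-1)^ng^{(n)}(z)\ge0$ for all $z>0$, $n\ge0$; $f$ is a Bernstein function if $f$ is $C^\infty$, $f(z)>0$ for $z>0$, and $f'$ is completely monotonic. A Bernstein function $f$ is complete if it has an analytic continuation to the upper half-plane $\mathbb{H}^+=\{z\in\mathbb{C}:\Im z>0\}$ with $f(\mathbb{H}^+)\subset\mathbb{H}^+$. *)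

(* Defs.v *)
From Stdlib Require Import Reals ClassicalEpsilon.
From Coquelicot Require Import Coquelicot.
Open Scope R_scope.

(* The principal branch of Lambert's W restricted to (0,oo): for x > 0,
   W(x) is the unique real w > 0 with w * exp w = x (the principal branch
   is real and positive on (0,oo)).  Values for x <= 0 are irrelevant. *)
Definition lambertW (x : R) : R :=
  epsilon (inhabits 0) (fun w => 0 < w /\ w * exp w = x).

Definition completely_monotonic (g : R -> R) : Prop :=
  (forall n x, 0 < x -> ex_derive_n g n x) /\
  (forall n x, 0 < x -> 0 <= (-1) ^ n * Derive_n g n x).

Definition bernstein (f : R -> R) : Prop :=
  (forall n x, 0 < x -> ex_derive_n f n x) /\
  (forall x, 0 < x -> 0 < f x) /\
  completely_monotonic (Derive f).

Definition upper_half_plane (z : C) : Prop := 0 < Im z.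

Definition complete_bernstein (f : R -> R) : Prop :=
  bernstein f /\
  exists (U : C -> Prop) (F : C -> C),
    open U /\
    (forall z, upper_half_plane z -> U z) /\
    (forall x : R, 0 < x -> U (RtoC x)) /\
    (forall z, U z -> @ex_derive C_AbsRing C_NormedModule F z) /\
    (forall x : R, 0 < x -> F (RtoC x) = RtoC (f x)) /\
    (forall z, upper_half_plane z -> upper_half_plane (F z)).

(* Main.v *)
Require Import Defs.
From Stdlib Require Import Reals Lra Lia ClassicalEpsilon.
From Coquelicot Require Import Coquelicot.
Open Scope R_scope.

Lemma cpt_eps (g : R -> R) x0 : continuity_pt g x0 ->
  forall e, 0 < e -> exists d, 0 < d /\ forall x, Rabs (x - x0) < d -> Rabs (g x - g x0) < e.
Proof.
  intros H e He. destruct (H e He) as [d [Hd Hx]]. exists d; split; auto.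
  intros x Hxd. destruct (Req_dec x x0) as [->|Hne].
  - rewrite Rminus_diag, Rabs_R0; auto.
  - apply (Hx x). split. split; [exact I| auto]. simpl. unfold R_dist. auto.
Qed.

Lemma exd_cpt (g : R -> R) x : ex_derive g x -> continuity_pt g x.
Proof. intros H. apply continuity_pt_filterlim. apply (ex_derive_continuous (K:=R_AbsRing) (V:=R_NormedModule)). auto. Qed.

Definition gw (w : R) := w * exp w.

Lemma gw_lt a b : 0 <= a -> a < b -> gw a < gw b.
Proof.
  intros Ha Hab. unfold gw. assert (exp a < exp b) by (apply exp_increasing; auto).
  assert (0 < exp a) by apply exp_pos. nra.
Qed.

Lemma gw_cont : continuity gw.
Proof. intro x. apply exd_cpt. unfold gw. auto_derive. auto. Qed.

Lemma W_exists x : 0 < x -> exists w, 0 < w /\ w * exp w = x.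
Proof.
  intros Hx. destruct (IVT (fun w => gw w - x) 0 x) as [z [Hz1 Hz2]].
  - intro a. apply continuity_pt_minus. apply gw_cont. apply continuity_pt_const. intros u v; auto.
  - auto.
  - unfold gw. rewrite exp_0. lra.
  - unfold gw. assert (1 < exp x). { pose proof (exp_ineq1 x). assert (x<>0) by lra. pose proof (H H0). lra. } nra.
  - exists z. unfold gw in Hz2. split; [|lra]. destruct Hz1 as [[H|H] _]; auto.
    subst. rewrite Rmult_0_l in Hz2. lra.
Qed.

Lemma W_spec x : 0 < x -> 0 < lambertW x /\ lambertW x * exp (lambertW x) = x.
Proof.
  intros Hx. unfold lambertW. apply epsilon_spec. apply W_exists; auto.
Qed.

Lemma W_pos x : 0 < x -> 0 < lambertW x.
Proof. intros; apply W_spec; auto. Qed.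

Lemma W_eq x : 0 < x -> gw (lambertW x) = x.
Proof. intros; apply W_spec; auto. Qed.

Lemma W_ge x t : 0 < x -> 0 <= t -> x <= gw t -> lambertW x <= t.
Proof.
  intros Hx Ht H. destruct (Rle_lt_dec (lambertW x) t) as [|Hlt]; auto.
  pose proof (gw_lt t _ Ht Hlt). rewrite W_eq in H0; auto. lra.
Qed.

Lemma W_le x t : 0 < x -> 0 <= t -> gw t <= x -> t <= lambertW x.
Proof.
  intros Hx Ht H. destruct (Rle_lt_dec t (lambertW x)) as [|Hlt]; auto.
  pose proof (gw_lt _ t (Rlt_le _ _ (W_pos x Hx)) Hlt). rewrite W_eq in H0; auto. lra.
Qed.

Lemma W_gt x t : 0 < x -> 0 <= t -> x < gw t -> lambertW x < t.
Proof.
  intros Hx Ht H. destruct (Rlt_le_dec (lambertW x) t) as [|Hle]; auto.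
  destruct Hle as [Hlt|Heq].
  - pose proof (gw_lt t _ Ht Hlt). rewrite W_eq in H0; auto. lra.
  - subst. rewrite W_eq in H; auto. lra.
Qed.

Lemma W_lt x t : 0 < x -> 0 <= t -> gw t < x -> t < lambertW x.
Proof.
  intros Hx Ht H. destruct (Rlt_le_dec t (lambertW x)) as [|Hle]; auto.
  destruct Hle as [Hlt|Heq].
  - pose proof (gw_lt _ t (Rlt_le _ _ (W_pos x Hx)) Hlt). rewrite W_eq in H0; auto. lra.
  - rewrite <- Heq in H. rewrite W_eq in H; auto. lra.
Qed.

Lemma W_cont x0 : 0 < x0 -> forall e, 0 < e -> exists d, 0 < d /\
  forall x, Rabs (x - x0) < d -> 0 < x /\ Rabs (lambertW x - lambertW x0) < e.
Proof.
  intros Hx0 e He. set (w0 := lambertW x0). assert (Hw0 : 0 < w0) by (apply W_pos; auto).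
  set (e' := Rmin e w0 / 2).
  assert (He' : 0 < e') by (unfold e'; apply Rdiv_lt_0_compat; [apply Rmin_pos|]; lra).
  assert (He'1 : e' < w0) by (unfold e'; pose proof (Rmin_r e w0); lra).
  assert (He'2 : e' < e) by (unfold e'; pose proof (Rmin_l e w0); lra).
  assert (HW : gw w0 = x0) by (apply W_eq; auto).
  assert (Ha : gw (w0 - e') < x0) by (rewrite <- HW; apply gw_lt; lra).
  assert (Hb : x0 < gw (w0 + e')) by (rewrite <- HW at 1; apply gw_lt; lra).
  exists (Rmin (x0 - gw (w0 - e')) (gw (w0 + e') - x0)). split.
  - apply Rmin_pos; lra.
  - intros x Hx. pose proof (Rmin_l (x0 - gw (w0 - e')) (gw (w0 + e') - x0)).
    pose proof (Rmin_r (x0 - gw (w0 - e')) (gw (w0 + e') - x0)).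
    apply Rabs_def2 in Hx. destruct Hx as [Hx1 Hx2].
    assert (0 < gw (w0 - e')) by (unfold gw; apply Rmult_lt_0_compat; [lra|apply exp_pos]).
    assert (Hxp : 0 < x) by lra. split; auto.
    assert (lambertW x < w0 + e') by (apply W_gt; auto; lra).
    assert (w0 - e' < lambertW x) by (apply W_lt; auto; lra).
    apply Rabs_def1; fold w0; lra.
Qed.

Lemma inv_core (A B D X Y e2 eps : R) : 0 < D -> 0 <= A -> 0 <= B -> 0 <= X ->
  X <= D / 2 * A -> D * A <= B + X -> X <= e2 * A -> e2 = eps * D * D / 4 -> 0 < eps ->
  Y = X / D -> Y <= eps / 2 * B.
Proof.
  intros HD HA HB HX H1 H2 H3 He2 Heps HY.
  assert (A <= 2 * B / D).
  { apply (Rmult_le_reg_l D); auto. field_simplify; try lra. }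
  subst Y. apply (Rmult_le_reg_l D); auto. field_simplify; try lra.
  subst e2. assert (X <= eps * D * D / 4 * (2 * B / D)).
  { eapply Rle_trans; [apply H3|]. apply Rmult_le_compat_l; auto. nra. }
  assert (eps * D * D / 4 * (2 * B / D) = eps * D * B / 2) by (field; lra). nra.
Qed.

Lemma inv_deriv_R (F G : R -> R) y0 d :
  d <> 0 ->
  (forall e, 0 < e -> exists del, 0 < del /\ forall w, Rabs (w - F y0) < del ->
     Rabs (G w - G (F y0) - d * (w - F y0)) <= e * Rabs (w - F y0)) ->
  (forall e, 0 < e -> exists del, 0 < del /\ forall y, Rabs (y - y0) < del -> Rabs (F y - F y0) < e) ->
  (exists del, 0 < del /\ forall y, Rabs (y - y0) < del -> G (F y) = y) ->
  is_derive F y0 (/ d).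
Proof.
  intros Hd HG HF [d0 [Hd0 HGF]]. apply is_derive_Reals. intros eps Heps.
  assert (HD : 0 < Rabs d) by (apply Rabs_pos_lt; auto).
  destruct (HG (Rabs d / 2)) as [d1 [Hd1 H1]]; [lra|].
  destruct (HG (eps * Rabs d * Rabs d / 4)) as [d2 [Hd2 H2]]; [assert (0 < eps*Rabs d*Rabs d) by (apply Rmult_lt_0_compat; [apply Rmult_lt_0_compat|]; lra); lra|].
  destruct (HF (Rmin d1 d2)) as [d3 [Hd3 H3]]; [apply Rmin_pos; auto|].
  assert (Hdel : 0 < Rmin d0 d3) by (apply Rmin_pos; auto).
  exists (mkposreal _ Hdel). intros h Hh Hhd. simpl in Hhd.
  assert (Hy : Rabs (y0 + h - y0) < d3) by (replace (y0 + h - y0) with h by ring; pose proof (Rmin_r d0 d3); lra).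
  assert (Hy0 : Rabs (y0 + h - y0) < d0) by (replace (y0 + h - y0) with h by ring; pose proof (Rmin_l d0 d3); lra).
  specialize (H3 _ Hy). pose proof (HGF _ Hy0) as E1.
  assert (E0 : G (F y0) = y0) by (apply HGF; rewrite Rminus_diag, Rabs_R0; auto).
  set (u := F (y0 + h) - F y0) in *.
  assert (Hu1 : Rabs u < d1) by (pose proof (Rmin_l d1 d2); lra).
  assert (Hu2 : Rabs u < d2) by (pose proof (Rmin_r d1 d2); lra).
  specialize (H1 _ Hu1). specialize (H2 _ Hu2).
  rewrite E1, E0 in H1, H2.
  assert (Hv : y0 + h - y0 = h) by ring. rewrite Hv in H1, H2.
  assert (Key : Rabs (u - h / d) <= eps / 2 * Rabs h).
  { apply (inv_core (Rabs u) (Rabs h) (Rabs d) (Rabs (h - d * u)) (Rabs (u - h / d))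
            (eps * Rabs d * Rabs d / 4) eps); auto; try apply Rabs_pos.
    - rewrite <- Rabs_mult. assert (Eq : d*u = h + - (h - d*u)) by ring. rewrite Eq at 1.
      eapply Rle_trans; [apply Rabs_triang|]. rewrite Rabs_Ropp. lra.
    - replace (u - h / d) with (- (h - d * u) / d) by (field; auto).
      unfold Rdiv. rewrite Rabs_mult, Rabs_Ropp, Rabs_inv. reflexivity. }
  replace (u / h - / d) with ((u - h / d) / h) by (field; auto).
  unfold Rdiv. rewrite Rabs_mult, Rabs_inv.
  assert (0 < Rabs h) by (apply Rabs_pos_lt; auto).
  apply (Rmult_lt_reg_r (Rabs h)); auto. rewrite Rmult_assoc, Rinv_l by lra. nra.
Qed.
Lemma deriv_eps_R (G : R -> R) w0 d : is_derive G w0 d ->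
  forall e, 0 < e -> exists del, 0 < del /\ forall w, Rabs (w - w0) < del ->
     Rabs (G w - G w0 - d * (w - w0)) <= e * Rabs (w - w0).
Proof.
  intros H e He. apply is_derive_Reals in H. destruct (H e He) as [del Hdel].
  exists del. split; [apply cond_pos|]. intros w Hw.
  destruct (Req_dec w w0) as [->|Hne].
  - rewrite !Rminus_diag. rewrite Rmult_0_r, Rminus_0_r, Rabs_R0. lra.
  - assert (Hh : w - w0 <> 0) by lra.
    specialize (Hdel (w - w0) Hh Hw). replace (w0 + (w - w0)) with w in Hdel by ring.
    replace (G w - G w0 - d * (w - w0)) with (((G w - G w0) / (w - w0) - d) * (w - w0)) by (field; auto).
    rewrite Rabs_mult. apply Rmult_le_compat_r; [apply Rabs_pos| lra].
Qed.

Lemma W_derive x : 0 < x -> is_derive lambertW x (/ (x + exp (lambertW x))).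
Proof.
  intros Hx. set (w0 := lambertW x).
  assert (Hw0 : 0 < w0) by (apply W_pos; auto).
  assert (E : x + exp w0 = (1 + w0) * exp w0).
  { pose proof (W_eq x Hx) as E. unfold gw in E. fold w0 in E. rewrite <- E at 1. ring. }
  rewrite E. apply (inv_deriv_R lambertW gw x).
  - apply Rmult_integral_contrapositive; split; [lra| apply Rgt_not_eq, exp_pos].
  - apply deriv_eps_R. unfold gw. auto_derive; auto. unfold w0. ring.
  - intros e He. destruct (W_cont x Hx e He) as [d [Hd H]]. exists d; split; auto.
    intros y Hy. apply H; auto.
  - exists x. split; auto. intros y Hy. apply W_eq.
    apply Rabs_def2 in Hy. lra.
Qed.

Lemma W_exd x : 0 < x -> ex_derive lambertW x.
Proof. intros Hx. eexists. apply W_derive; auto. Qed.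

Lemma W_Derive x : 0 < x -> Derive lambertW x = / (x + exp (lambertW x)).
Proof. intros Hx. apply is_derive_unique. apply W_derive; auto. Qed.

Lemma exdR_plus (f g : R -> R) x : ex_derive f x -> ex_derive g x -> ex_derive (fun y => f y + g y) x.
Proof. apply (@ex_derive_plus R_AbsRing R_NormedModule). Qed.
Lemma exdR_opp (f : R -> R) x : ex_derive f x -> ex_derive (fun y => - f y) x.
Proof. apply (@ex_derive_opp R_AbsRing R_NormedModule). Qed.
Lemma exdR_comp (f g : R -> R) x : ex_derive f (g x) -> ex_derive g x -> ex_derive (fun y => f (g y)) x.
Proof. apply (@ex_derive_comp R_AbsRing R_NormedModule). Qed.
Lemma exdR_const (a x : R) : ex_derive (fun _ => a) x.
Proof. apply (@ex_derive_const R_AbsRing R_NormedModule). Qed.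

Fixpoint CMn (n : nat) (f : R -> R) : Prop :=
  match n with
  | O => forall x, 0 < x -> 0 <= f x
  | S m => (forall x, 0 < x -> 0 <= f x) /\ (forall x, 0 < x -> ex_derive f x) /\
           CMn m (fun x => - Derive f x)
  end.

Lemma CMn_nonneg n f : CMn n f -> forall x, 0 < x -> 0 <= f x.
Proof. destruct n; simpl; intros H; [exact H| apply H]. Qed.

Lemma loc_pos x : 0 < x -> locally x (fun t => 0 < t).
Proof.
  intros Hx. exists (mkposreal x Hx). intros t Ht. simpl in Ht.
  unfold ball in Ht; simpl in Ht; unfold AbsRing_ball, abs, minus, plus, opp in Ht; simpl in Ht.
  apply Rabs_def2 in Ht. lra.
Qed.

Lemma CMn_ext n : forall f g, (forall x, 0 < x -> f x = g x) -> CMn n f -> CMn n g.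
Proof.
  induction n; intros f g E H; simpl in *.
  - intros x Hx. rewrite <- E; auto.
  - destruct H as [H1 [H2 H3]]. split; [|split].
    + intros x Hx. rewrite <- E; auto.
    + intros x Hx. apply (ex_derive_ext_loc f); auto.
      apply (filter_imp (fun t => 0 < t)); [|apply loc_pos; auto]. intros; apply E; auto.
    + apply (IHn (fun x => - Derive f x)); [|exact H3]. intros x Hx. f_equal. apply Derive_ext_loc.
      apply (filter_imp (fun t => 0 < t)); [|apply loc_pos; auto]. intros; apply E; auto.
Qed.

Lemma CMn_S n : forall f, CMn (S n) f -> CMn n f.
Proof.
  induction n; intros f H; simpl in *.
  - apply H.
  - destruct H as [H1 [H2 H3]]. split; [auto|split; auto].
Qed.

Lemma CMn_plus n : forall f g, CMn n f -> CMn n g -> CMn n (fun x => f x + g x).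
Proof.
  induction n; intros f g Hf Hg; simpl in *.
  - intros x Hx. specialize (Hf x Hx). specialize (Hg x Hx). lra.
  - destruct Hf as [F1 [F2 F3]]. destruct Hg as [G1 [G2 G3]]. split; [|split].
    + intros x Hx. specialize (F1 x Hx). specialize (G1 x Hx). lra.
    + intros x Hx. apply exdR_plus; auto.
    + apply (CMn_ext n (fun x => (- Derive f x) + (- Derive g x))).
      * intros x Hx. rewrite Derive_plus; auto. ring.
      * apply IHn; auto.
Qed.

Lemma CMn_mult n : forall f g, CMn n f -> CMn n g -> CMn n (fun x => f x * g x).
Proof.
  induction n; intros f g Hf Hg.
  - simpl in *. intros x Hx. apply Rmult_le_pos; auto.
  - assert (Hf' := CMn_S _ _ Hf). assert (Hg' := CMn_S _ _ Hg).
    simpl in Hf, Hg. destruct Hf as [F1 [F2 F3]]. destruct Hg as [G1 [G2 G3]].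
    simpl. split; [|split].
    + intros x Hx. apply Rmult_le_pos; auto.
    + intros x Hx. apply ex_derive_mult; auto.
    + apply (CMn_ext n (fun x => (- Derive f x) * g x + f x * (- Derive g x))).
      * intros x Hx. rewrite Derive_mult; auto. ring.
      * apply CMn_plus; apply IHn; auto.
Qed.

Lemma CMn_const n : forall c, 0 <= c -> CMn n (fun _ => c).
Proof.
  induction n; intros c Hc; simpl.
  - intros; auto.
  - split; [auto|split].
    + intros; apply exdR_const.
    + apply (CMn_ext n (fun _ => 0)); [|apply IHn; lra].
      intros x Hx. rewrite Derive_const. ring.
Qed.

Definition CMall (h : R -> R) := forall n, CMn n h.

Lemma CMall_D h : CMall h -> CMall (fun x => - Derive h x).
Proof. intros H n. exact (proj2 (proj2 (H (S n)))). Qed.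

Lemma CMn_comp n : forall h f, CMall h -> (forall x, 0 < x -> 0 < f x) ->
  (forall x, 0 < x -> ex_derive f x) -> CMn n (Derive f) -> CMn (S n) (fun x => h (f x)).
Proof.
  induction n; intros h f Hh Hfp Hfd HDf.
  - simpl. split; [|split].
    + intros x Hx. apply (CMn_nonneg 0 h (Hh O)); auto.
    + intros x Hx. apply exdR_comp; auto. apply (proj1 (proj2 (Hh 1%nat))); auto.
    + intros x Hx. rewrite (Derive_comp h f x); auto.
      * pose proof (proj2 (proj2 (Hh 1%nat)) (f x) (Hfp x Hx)). simpl in H.
        pose proof (HDf x Hx). simpl in H0. nra.
      * apply (proj1 (proj2 (Hh 1%nat))); auto.
  - simpl. split; [|split].
    + intros x Hx. apply (CMn_nonneg 0 h (Hh O)); auto.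
    + intros x Hx. apply exdR_comp; auto. apply (proj1 (proj2 (Hh 1%nat))); auto.
    + apply (CMn_ext (S n) (fun x => (- Derive h (f x)) * Derive f x)).
      * intros x Hx. rewrite (Derive_comp h f x); auto. ring.
        apply (proj1 (proj2 (Hh 1%nat))); auto.
      * apply CMn_mult; auto.
        apply (IHn (fun t => - Derive h t) f); auto.
        apply CMall_D; auto. apply CMn_S; auto.
Qed.

Lemma CM_powfam (a : R) : 0 <= a -> forall n c k, 0 <= c -> CMn n (fun t => c / (t + a) ^ (S k)).
Proof.
  intros Ha n. induction n; intros c k Hc; cbn [CMn].
  - intros x Hx. apply Rdiv_le_0_compat; auto. apply pow_lt. lra.
  - split; [|split].
    + intros x Hx. apply Rdiv_le_0_compat; auto. apply pow_lt. lra.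
    + intros x Hx. auto_derive. apply Rmult_integral_contrapositive; split; [lra| apply pow_nonzero; lra].
    + apply (CMn_ext n (fun t => (c * INR (S k)) / (t + a) ^ (S (S k)))).
      * intros x Hx. rewrite (is_derive_unique _ _ (- (c * INR (S k)) / (x + a) ^ (S (S k)))).
        { field. apply pow_nonzero. lra. }
        auto_derive. apply Rmult_integral_contrapositive; split; [lra| apply pow_nonzero; lra].
        replace (match k with 0%nat => 1 | S _ => INR k + 1 end) with (INR (S k)) by reflexivity.
        change ((x+a)^S (S k)) with ((x+a)*((x+a)*(x+a)^k)).
        assert ((x+a)^k <> 0) by (apply pow_nonzero; lra). field. split; lra.
      * apply IHn. apply Rmult_le_pos; auto. apply pos_INR.
Qed.

Lemma CMall_inv : CMall (fun t => / t).
Proof.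
  intro n. apply (CMn_ext n (fun t => 1 / (t + 0) ^ 1)); [|apply CM_powfam; lra].
  intros x Hx. simpl. field. lra.
Qed.

Lemma CMall_inv1 : CMall (fun t => / (1 + t)).
Proof.
  intro n. apply (CMn_ext n (fun t => 1 / (t + 1) ^ 1)); [|apply CM_powfam; lra].
  intros x Hx. simpl. field. lra.
Qed.

Lemma Wg_Derive x : 0 < x -> Derive (fun y => y + exp (lambertW y)) x = 1 + / (1 + lambertW x).
Proof.
  intros Hx. rewrite Derive_plus.
  - rewrite Derive_id. rewrite (Derive_comp exp lambertW x).
    + rewrite W_Derive; auto. rewrite (is_derive_unique exp (lambertW x) (exp (lambertW x))).
      2:{ apply is_derive_Reals. apply derivable_pt_lim_exp. } pose proof (W_eq x Hx) as E. unfold gw in E.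
      pose proof (W_pos x Hx). pose proof (exp_pos (lambertW x)).
      rewrite <- E at 1. field. split; [|lra]. nra.
    + eexists. apply is_derive_Reals. apply derivable_pt_lim_exp.
    + apply W_exd; auto.
  - apply ex_derive_id.
  - apply exdR_comp. eexists. apply is_derive_Reals. apply derivable_pt_lim_exp. apply W_exd; auto.
Qed.

Lemma W_CM_step n : CMn n (Derive lambertW) -> CMn (S n) (Derive lambertW).
Proof.
  intros H. apply CMn_S.
  assert (A : CMn (S n) (fun x => / (1 + lambertW x))).
  { apply (CMn_comp n (fun t => / (1 + t)) lambertW); auto.
    apply CMall_inv1. apply W_pos. apply W_exd. }
  assert (B : CMn (S n) (fun x => 1 + / (1 + lambertW x))).
  { apply (CMn_plus (S n) (fun _ => 1)); auto. apply CMn_const; lra. }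
  assert (C : CMn (S n) (Derive (fun y => y + exp (lambertW y)))).
  { apply (CMn_ext _ _ _ (fun x Hx => eq_sym (Wg_Derive x Hx))); auto. }
  assert (D : CMn (S (S n)) (fun x => / (x + exp (lambertW x)))).
  { apply (CMn_comp (S n) (fun t => / t) (fun y => y + exp (lambertW y))); auto.
    apply CMall_inv.
    - intros x Hx. pose proof (exp_pos (lambertW x)). lra.
    - intros x Hx. apply exdR_plus. apply ex_derive_id. apply exdR_comp.
      eexists. apply is_derive_Reals. apply derivable_pt_lim_exp. apply W_exd; auto. }
  apply (CMn_ext _ _ _ (fun x Hx => eq_sym (W_Derive x Hx))); auto.
Qed.

Lemma W_CM : CMall (Derive lambertW).
Proof.
  intro n. induction n.
  - simpl. intros x Hx. rewrite W_Derive; auto. pose proof (exp_pos (lambertW x)).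
    apply Rlt_le, Rinv_0_lt_compat. lra.
  - apply W_CM_step; auto.
Qed.

Lemma CM_sign n : forall f, CMn n f -> forall x, 0 < x -> 0 <= (-1) ^ n * Derive_n f n x.
Proof.
  induction n; intros f H x Hx.
  - simpl. rewrite Rmult_1_l. apply (CMn_nonneg 0 f H x Hx).
  - pose proof (IHn _ (proj2 (proj2 H)) x Hx) as K.
    rewrite Derive_n_opp in K.
    replace (Derive_n (Derive f) n x) with (Derive_n f (S n) x) in K.
    + change ((-1)^(S n) * Derive_n f (S n) x) with ((-1) * (-1)^n * Derive_n f (S n) x).
      replace ((-1) * (-1)^n * Derive_n f (S n) x) with ((-1)^n * - Derive_n f (S n) x) by ring. exact K.
    + replace (S n) with (n + 1)%nat by lia. rewrite <- (Derive_n_comp f n 1). reflexivity.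
Qed.

Lemma CM_exd : forall n f, CMall f -> forall x, 0 < x -> ex_derive (Derive_n f n) x.
Proof.
  induction n; intros f H x Hx.
  - simpl. apply (proj1 (proj2 (H 1%nat))); auto.
  - assert (E : forall y, Derive_n f (S n) y = - Derive_n (fun t => - Derive f t) n y).
    { intros y. rewrite Derive_n_opp. rewrite Ropp_involutive.
      replace (S n) with (n + 1)%nat by lia. rewrite <- (Derive_n_comp f n 1). reflexivity. }
    apply (ex_derive_ext (fun y => - Derive_n (fun t => - Derive f t) n y)).
    + intros; rewrite E; auto.
    + apply exdR_opp. apply IHn; auto. apply CMall_D; auto.
Qed.

Lemma W_bernstein : bernstein lambertW.
Proof.
  split; [|split].
  - intros n x Hx. destruct n; simpl; auto. destruct n.
    + simpl. apply W_exd; auto.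
    + assert (E : forall y, Derive_n lambertW (S n) y = Derive_n (Derive lambertW) n y).
      { intros y. replace (S n) with (n + 1)%nat by lia. rewrite <- (Derive_n_comp lambertW n 1). reflexivity. }
      change (ex_derive (Derive_n lambertW (S n)) x).
      apply (ex_derive_ext (Derive_n (Derive lambertW) n)); [intros; rewrite E; auto|].
      apply CM_exd; auto. apply W_CM.
  - apply W_pos.
  - split.
    + intros n x Hx. destruct n; simpl; auto. apply CM_exd; auto. apply W_CM.
    + intros n x Hx. apply CM_sign; auto. apply W_CM.
Qed.

Lemma abs_le a c : Rabs a <= c -> - c <= a <= c.
Proof. unfold Rabs; destruct (Rcase_abs a); lra. Qed.

Lemma exp_up a : a < 1 -> exp a <= / (1 - a).
Proof.
  intros Ha. pose proof (exp_ineq1_le (- a)). pose proof (exp_pos a).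
  assert (E : exp a * exp (- a) = 1) by (rewrite <- exp_plus; replace (a + - a) with 0 by ring; apply exp_0).
  apply (Rmult_le_reg_r (1 - a)); [lra|]. rewrite Rinv_l by lra. nra.
Qed.

Lemma exp_b1 a : Rabs a <= 1/2 -> Rabs (exp a - 1 - a) <= 2 * a ^ 2.
Proof.
  intros Ha. apply abs_le in Ha. pose proof (exp_ineq1_le a). pose proof (exp_up a).
  assert (/ (1 - a) - 1 - a = a^2 / (1 - a)) by (field; lra).
  assert (a^2 / (1-a) <= 2 * a^2).
  { apply (Rmult_le_reg_r (1 - a)); [lra|]. unfold Rdiv. rewrite Rmult_assoc, Rinv_l by lra. nra. }
  rewrite Rabs_pos_eq; [|lra]. assert (exp a <= / (1 - a)) by (apply H0; lra). lra.
Qed.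

Lemma exp_b2 a : Rabs a <= 1/2 -> Rabs (exp a - 1) <= 2 * Rabs a /\ exp a <= 2.
Proof.
  intros Ha. pose proof (exp_b1 a Ha). apply abs_le in Ha. pose proof (exp_ineq1_le a).
  assert (exp a <= / (1 - a)) by (apply exp_up; lra).
  assert (/ (1 - a) <= 2) by (apply (Rmult_le_reg_r (1 - a)); [lra|]; rewrite Rinv_l by lra; lra).
  apply abs_le in H. split; [|lra].
  destruct (Rle_dec 0 a).
  - rewrite Rabs_pos_eq by lra. rewrite Rabs_pos_eq by lra. nra.
  - rewrite (Rabs_left a) by lra. apply Rabs_le. split; [lra|]. nra.
Qed.

Lemma cos_b b : Rabs b <= 1/2 -> Rabs (cos b - 1) <= b ^ 2 / 2.
Proof.
  intros Hb. apply abs_le in Hb. pose proof PI2_1.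
  destruct (cos_bound b 0) as [H1 _]; [lra|lra|].
  unfold cos_approx, cos_term in H1. simpl in H1. pose proof (COS_bound b).
  rewrite Rabs_left1 by lra. lra.
Qed.

Lemma sin_b0 b : 0 <= b -> b <= 1/2 -> Rabs (sin b - b) <= b ^ 2 / 12.
Proof.
  intros Hb1 Hb2. pose proof PI2_1.
  destruct (sin_bound b 0) as [H1 H2]; [lra|lra|].
  unfold sin_approx, sin_term in H1, H2. simpl in H1, H2.
  assert (sin b <= b) by (destruct (Req_dec b 0) as [->|]; [rewrite sin_0; lra| left; apply sin_lt_x; lra]).
  rewrite Rabs_left1 by lra. nra.
Qed.

Lemma sin_b b : Rabs b <= 1/2 -> Rabs (sin b - b) <= b ^ 2 / 12.
Proof.
  intros Hb. destruct (Rle_dec 0 b).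
  - apply sin_b0; auto. apply abs_le in Hb; lra.
  - replace (sin b - b) with (- (sin (- b) - (- b))) by (rewrite sin_neg; ring).
    rewrite Rabs_Ropp. replace (b ^ 2) with ((- b) ^ 2) by ring.
    apply sin_b0; apply abs_le in Hb; lra.
Qed.

Lemma sin_abs b : Rabs b <= 1/2 -> Rabs (sin b) <= 2 * Rabs b.
Proof.
  intros Hb. pose proof (sin_b b Hb). pose proof (Rabs_triang (sin b - b) b).
  replace (sin b - b + b) with (sin b) in H0 by ring.
  assert (b^2/12 <= Rabs b) by (rewrite <- (Rabs_pos_eq (b^2/12)) by nra; rewrite (Rabs_pos_eq (b^2/12)) by nra;
    replace (b^2) with (Rabs b * Rabs b) by (rewrite <- Rabs_mult; simpl; rewrite Rmult_1_r; apply Rabs_pos_eq; nra);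
    pose proof (Rabs_pos b); nra).
  lra.
Qed.

Definition Cexp (w : C) : C := (exp (fst w) * cos (snd w), exp (fst w) * sin (snd w)).
Definition Gc (w : C) : C := (w * Cexp w)%C.

Lemma Cexp_add a b : Cexp (a + b)%C = (Cexp a * Cexp b)%C.
Proof.
  destruct a as [a1 a2], b as [b1 b2]. unfold Cexp, Cmult, Cplus; simpl.
  rewrite exp_plus, cos_plus, sin_plus. f_equal; ring.
Qed.

Lemma Cmod_snd p : Rabs (snd p) <= Cmod p.
Proof.
  destruct p as [x y]. unfold Cmod; simpl. rewrite <- sqrt_Rsqr_abs. apply sqrt_le_1_alt.
  unfold Rsqr. nra.
Qed.

Lemma Cmod_fst p : Rabs (fst p) <= Cmod p.
Proof. apply re_le_Cmod. Qed.

Lemma Cmod_le_sum p : Cmod p <= Rabs (fst p) + Rabs (snd p).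
Proof.
  destruct p as [x y]. unfold Cmod; simpl.
  rewrite <- (sqrt_Rsqr (Rabs x + Rabs y)) by (pose proof (Rabs_pos x); pose proof (Rabs_pos y); lra).
  apply sqrt_le_1_alt. unfold Rsqr. pose proof (Rabs_pos x); pose proof (Rabs_pos y).
  assert (x * (x * 1) = Rabs x * Rabs x) by (rewrite <- Rabs_mult; rewrite Rmult_1_r; symmetry; apply Rabs_pos_eq; nra).
  assert (y * (y * 1) = Rabs y * Rabs y) by (rewrite <- Rabs_mult; rewrite Rmult_1_r; symmetry; apply Rabs_pos_eq; nra).
  simpl. nra.
Qed.

Lemma Cmod_Cexp w : Cmod (Cexp w) = exp (fst w).
Proof.
  unfold Cmod, Cexp; simpl. pose proof (exp_pos (fst w)).
  replace (exp (fst w) * cos (snd w) * (exp (fst w) * cos (snd w) * 1) +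
    exp (fst w) * sin (snd w) * (exp (fst w) * sin (snd w) * 1)) with
    (exp (fst w) * exp (fst w) * (sin (snd w) ^ 2 + cos (snd w) ^ 2)) by ring.
  replace (sin (snd w) ^ 2 + cos (snd w) ^ 2) with 1 by (rewrite <- (sin2_cos2 (snd w)); unfold Rsqr; ring). rewrite Rmult_1_r. apply sqrt_square. lra.
Qed.

Lemma sq_le a m : Rabs a <= m -> a ^ 2 <= m ^ 2.
Proof. intros H. replace (a^2) with (Rabs a ^ 2) by (unfold Rabs; destruct Rcase_abs; ring).
  pose proof (Rabs_pos a). nra. Qed.

Lemma Eh_bound h : Cmod h <= 1/2 -> Cmod (Cexp h - 1 - h)%C <= 8 * Cmod h ^ 2.
Proof.
  intros Hh. destruct h as [a b].
  pose proof (Cmod_fst (a, b)) as Ha. pose proof (Cmod_snd (a, b)) as Hb. simpl in Ha, Hb.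
  set (m := Cmod (a, b)) in *.
  assert (Ha2 : Rabs a <= 1/2) by lra. assert (Hb2 : Rabs b <= 1/2) by lra.
  eapply Rle_trans; [apply Cmod_le_sum|]. unfold Cexp; simpl.
  pose proof (exp_b1 a Ha2). destruct (exp_b2 a Ha2) as [E2 E3].
  pose proof (cos_b b Hb2). pose proof (sin_b b Hb2). pose proof (sin_abs b Hb2).
  pose proof (Rabs_pos a). pose proof (Rabs_pos b). pose proof (exp_pos a).
  assert (Re1 : Rabs (exp a * cos b - 1 - a) <= 2 * a^2 + b^2).
  { replace (exp a * cos b - 1 - a) with ((exp a - 1 - a) + exp a * (cos b - 1)) by ring.
    eapply Rle_trans; [apply Rabs_triang|]. rewrite Rabs_mult, (Rabs_pos_eq (exp a)) by lra.
    assert (exp a * Rabs (cos b - 1) <= 2 * (b^2/2)).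
    { apply Rmult_le_compat; auto; try lra. apply Rabs_pos. }
    lra. }
  assert (Im1 : Rabs (exp a * sin b - b) <= 4 * Rabs a * Rabs b + b^2/12).
  { replace (exp a * sin b - b) with ((exp a - 1) * sin b + (sin b - b)) by ring.
    eapply Rle_trans; [apply Rabs_triang|]. rewrite Rabs_mult.
    assert (Rabs (exp a - 1) * Rabs (sin b) <= (2 * Rabs a) * (2 * Rabs b)).
    { apply Rmult_le_compat; auto; apply Rabs_pos. }
    lra. }
  assert (a^2 <= m^2) by (apply sq_le; auto).
  assert (b^2 <= m^2) by (apply sq_le; auto).
  assert (Rabs a * Rabs b <= m^2) by nra.
  replace (exp a * cos b - 1 - a) with (exp a * cos b - 1 - a) in Re1 by ring.
  match goal with |- Rabs ?X + Rabs ?Y <= _ =>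
    replace X with (exp a * cos b - 1 - a) by ring; replace Y with (exp a * sin b - b) by ring end.
  replace (8 * (m * (m*1))) with (8 * m^2) by ring.
  rewrite Rmult_assoc in Im1. assert (0 <= m^2) by nra. lra.
Qed.

Lemma Gc_eps w : forall e, 0 < e -> exists del, 0 < del /\ forall w',
  Cmod (w' - w) < del -> Cmod (Gc w' - Gc w - ((1 + w) * Cexp w) * (w' - w))%C <= e * Cmod (w' - w).
Proof.
  intros e He.
  set (K := Cmod (Cexp w) * ((Cmod w + 1) * 8 + 1)).
  assert (HE : 0 < Cmod (Cexp w)) by (rewrite Cmod_Cexp; apply exp_pos).
  assert (HK : 0 < K) by (unfold K; pose proof (Cmod_ge_0 w); apply Rmult_lt_0_compat; lra).
  exists (Rmin (1/2) (e / K)). split; [apply Rmin_pos; [lra| apply Rdiv_lt_0_compat; auto]|].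
  intros w' Hw'. set (h := (w' - w)%C) in *. set (m := Cmod h) in *.
  assert (Hm1 : m <= 1/2) by (pose proof (Rmin_l (1/2) (e/K)); lra).
  assert (Hm2 : m <= e / K) by (pose proof (Rmin_r (1/2) (e/K)); lra).
  assert (Hm0 : 0 <= m) by apply Cmod_ge_0.
  assert (Ew : w' = (w + h)%C) by (unfold h; ring).
  assert (Id : (Gc w' - Gc w - (1 + w) * Cexp w * h = Cexp w * ((w + h) * (Cexp h - 1 - h) + h * h))%C).
  { rewrite Ew. unfold Gc. rewrite Cexp_add. ring. }
  rewrite Id. rewrite Cmod_mult.
  assert (B1 : Cmod ((w + h) * (Cexp h - 1 - h) + h * h)%C <= (Cmod w + 1) * (8 * m ^ 2) + m * m).
  { eapply Rle_trans; [apply Cmod_triangle|]. rewrite !Cmod_mult.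
    pose proof (Eh_bound h Hm1) as EB. fold m in EB.
    assert (Cmod (w + h) <= Cmod w + 1) by (pose proof (Cmod_triangle w h); fold m in H; lra).
    assert (Cmod (w + h) * Cmod (Cexp h - 1 - h) <= (Cmod w + 1) * (8 * m^2)).
    { apply Rmult_le_compat; auto; apply Cmod_ge_0. }
    fold m. lra. }
  assert (Cmod (Cexp w) * Cmod ((w + h) * (Cexp h - 1 - h) + h * h)%C <= K * m * m).
  { unfold K. eapply Rle_trans. apply Rmult_le_compat_l; [lra| apply B1]. nra. }
  assert (K * m <= e) by (apply (Rmult_le_reg_r (/ K)); [apply Rinv_0_lt_compat; auto|];
     replace (K * m * / K) with m by (field; lra); unfold Rdiv in Hm2; lra).
  nra.
Qed.

Lemma sqrt2_lt2 : sqrt 2 < 2.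
Proof.
  pose proof (sqrt_pos 2). pose proof (sqrt_sqrt 2). nra.
Qed.

Lemma locC (z : C) (P : C -> Prop) : (exists del, 0 < del /\ forall y, Cmod (y - z) < del -> P y) -> locally z P.
Proof.
  intros [d [Hd H]]. exists (mkposreal (d / 2) ltac:(lra)). intros y Hy. apply H.
  destruct Hy as [H1 H2]. simpl in H1, H2.
  unfold AbsRing_ball, abs, minus, plus, opp in H1, H2; simpl in H1, H2.
  eapply Rle_lt_trans; [apply Cmod_2Rmax|]. simpl.
  pose proof sqrt2_lt2. pose proof (sqrt_pos 2).
  assert (Rmax (Rabs (fst y + - fst z)) (Rabs (snd y + - snd z)) < d / 2) by (apply Rmax_lub_lt; auto).
  assert (0 <= Rmax (Rabs (fst y + - fst z)) (Rabs (snd y + - snd z))) by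
    (eapply Rle_trans; [apply Rabs_pos| apply Rmax_l]).
  nra.
Qed.

Lemma locCa (z : C) (P : C -> Prop) : (exists del, 0 < del /\ forall y, Cmod (y - z) < del -> P y) ->
  @locally (AbsRing_UniformSpace C_AbsRing) z P.
Proof.
  intros [d [Hd H]]. exists (mkposreal d Hd). intros y Hy. apply H. exact Hy.
Qed.

Lemma C_derive_of_eps (F : C -> C) (z l : C) :
  (forall e, 0 < e -> exists del, 0 < del /\ forall y, Cmod (y - z) < del ->
     Cmod (F y - F z - (y - z) * l)%C <= e * Cmod (y - z)) ->
  @is_derive C_AbsRing C_NormedModule F z l.
Proof.
  intros H. split.
  - apply is_linear_scal_l.
  - intros x Hx. assert (z = x) by (apply (@is_filter_lim_locally_unique C_AbsRing (AbsRing_NormedModule C_AbsRing)); exact Hx). subst x.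
    intros eps. apply locCa. destruct (H eps (cond_pos eps)) as [d [Hd Hd2]].
    exists d; split; auto.

Qed.

Lemma inv_deriv_C (F G : C -> C) (z0 d : C) :
  d <> 0%C ->
  (forall e, 0 < e -> exists del, 0 < del /\ forall w, Cmod (w - F z0) < del ->
     Cmod (G w - G (F z0) - d * (w - F z0))%C <= e * Cmod (w - F z0)) ->
  (forall e, 0 < e -> exists del, 0 < del /\ forall z, Cmod (z - z0) < del -> Cmod (F z - F z0) < e) ->
  (exists del, 0 < del /\ forall z, Cmod (z - z0) < del -> G (F z) = z) ->
  @is_derive C_AbsRing C_NormedModule F z0 (/ d)%C.
Proof.
  intros Hd HG HF [d0 [Hd0 HGF]]. apply C_derive_of_eps. intros eps Heps.
  assert (HD : 0 < Cmod d) by (apply Cmod_gt_0; exact Hd).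
  destruct (HG (Cmod d / 2)) as [d1 [Hd1 H1]]; [lra|].
  destruct (HG (eps * Cmod d * Cmod d / 4)) as [d2 [Hd2 H2]];
    [assert (0 < eps*Cmod d*Cmod d) by (apply Rmult_lt_0_compat; [apply Rmult_lt_0_compat|]; lra); lra|].
  destruct (HF (Rmin d1 d2)) as [d3 [Hd3 H3]]; [apply Rmin_pos; auto|].
  exists (Rmin d0 d3). split; [apply Rmin_pos; auto|]. intros y Hy.
  assert (Hy3 : Cmod (y - z0) < d3) by (pose proof (Rmin_r d0 d3); lra).
  assert (Hy0 : Cmod (y - z0) < d0) by (pose proof (Rmin_l d0 d3); lra).
  specialize (H3 _ Hy3). pose proof (HGF _ Hy0) as E1.
  assert (E0 : G (F z0) = z0) by (apply HGF; replace (z0 - z0)%C with (RtoC 0) by ring; rewrite Cmod_0; auto).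
  set (u := (F y - F z0)%C) in *.
  assert (Hu1 : Cmod u < d1) by (pose proof (Rmin_l d1 d2); lra).
  assert (Hu2 : Cmod u < d2) by (pose proof (Rmin_r d1 d2); lra).
  specialize (H1 _ Hu1). specialize (H2 _ Hu2).
  rewrite E1, E0 in H1, H2. set (v := (y - z0)%C) in *.
  assert (Key : Cmod (u - v / d)%C <= eps / 2 * Cmod v).
  { apply (inv_core (Cmod u) (Cmod v) (Cmod d) (Cmod (v - d * u)%C) (Cmod (u - v / d)%C)
            (eps * Cmod d * Cmod d / 4) eps); auto; try apply Cmod_ge_0.
    - rewrite <- Cmod_mult. assert (Eq : (d*u = v + - (v - d*u))%C) by ring. rewrite Eq at 1.
      eapply Rle_trans; [apply Cmod_triangle|]. rewrite Cmod_opp. lra.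
    - replace (u - v / d)%C with (- (v - d * u) * / d)%C by (field; auto).
      rewrite Cmod_mult, Cmod_opp, Cmod_inv by auto. reflexivity. }
  replace (u - v * / d)%C with (u - v / d)%C by (field; auto).
  pose proof (Cmod_ge_0 v). nra.
Qed.

Definition kf t e := e / sin (t - e) * exp (e * cos (t - e) / sin (t - e)).
Definition kd t e := exp (e * cos (t - e) / sin (t - e)) *
   (sin (t - e) ^ 2 + 2 * e * sin (t - e) * cos (t - e) + e ^ 2) / sin (t - e) ^ 3.

Lemma kf_deriv t e : sin (t - e) <> 0 -> is_derive (kf t) e (kd t e).
Proof.
  intros H. unfold kf, kd. auto_derive; auto.
  replace (t + - e) with (t - e) by ring.
  set (s := sin (t - e)) in *. set (c := cos (t - e)).
  assert (Hsc : s ^ 2 + c ^ 2 = 1) by (unfold s, c; rewrite <- (sin2_cos2 (t - e)); unfold Rsqr; ring).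
  replace (e ^ 2) with (e ^ 2 * (s ^ 2 + c ^ 2)) by (rewrite Hsc; ring).
  unfold Rdiv. field. auto.
Qed.

Lemma kd_pos t e : 0 < sin (t - e) -> 0 < e -> 0 < kd t e.
Proof.
  intros Hs He. unfold kd. set (s := sin (t - e)) in *. set (c := cos (t - e)).
  assert (Hsc : s ^ 2 + c ^ 2 = 1) by (unfold s, c; rewrite <- (sin2_cos2 (t - e)); unfold Rsqr; ring).
  apply Rdiv_lt_0_compat; [|apply pow_lt; auto].
  apply Rmult_lt_0_compat; [apply exp_pos|].
  assert (s ^ 2 + 2 * e * s * c + e ^ 2 = (s + e * c) ^ 2 + e ^ 2 * s ^ 2).
  { replace (e^2) with (e^2 * (s^2 + c^2)) at 1 by (rewrite Hsc; ring). ring. }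
  rewrite H. assert (0 < e ^ 2 * s ^ 2) by (apply Rmult_lt_0_compat; apply pow_lt; auto).
  pose proof (pow2_ge_0 (s + e * c)). lra.
Qed.

Lemma sin_pos_int u : 0 < u -> u < PI -> 0 < sin u.
Proof. intros; apply sin_gt_0; auto. Qed.

Lemma kf_incr t a b : t <= PI -> 0 < a -> a < b -> b < t -> kf t a < kf t b.
Proof.
  intros Ht Ha Hab Hb.
  destruct (MVT_cor2 (kf t) (kd t) a b Hab) as [c [Hc1 Hc2]].
  - intros c Hc. apply is_derive_Reals. apply kf_deriv. apply Rgt_not_eq, sin_pos_int; lra.
  - assert (0 < kd t c) by (apply kd_pos; [apply sin_pos_int|]; lra).
    assert (0 < kd t c * (b - a)) by (apply Rmult_lt_0_compat; lra). lra.
Qed.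

Lemma kf_le t a b : t <= PI -> 0 < a -> a <= b -> b < t -> kf t a <= kf t b.
Proof.
  intros Ht Ha Hab Hb. destruct Hab as [Hab|<-]; [left; apply kf_incr; auto| lra].
Qed.

Lemma kf_cont_e t e : 0 < t - e < PI -> continuity_pt (kf t) e.
Proof.
  intros H. apply exd_cpt. eexists. apply kf_deriv. apply Rgt_not_eq, sin_pos_int; lra.
Qed.

Lemma kf_cont_t t e : 0 < t - e < PI -> continuity_pt (fun s => kf s e) t.
Proof.
  intros H. apply exd_cpt. unfold kf. auto_derive.
  replace (t + - e) with (t - e) by ring. assert (sin (t - e) <> 0) by (apply Rgt_not_eq, sin_pos_int; lra). tauto.
Qed.

Lemma kf_exists t r : 0 < t -> t < PI -> 0 < r -> exists e, 0 < e < t /\ kf t e = r.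
Proof.
  intros Ht HtP Hr.
  assert (Hk0 : kf t 0 = 0) by (unfold kf; unfold Rdiv; ring).
  destruct (cpt_eps (kf t) 0 (kf_cont_e t 0 ltac:(lra)) r Hr) as [d [Hd Hd2]].
  set (e1 := Rmin (d / 2) (t / 4)).
  assert (He1 : 0 < e1) by (apply Rmin_pos; lra).
  assert (He1t : e1 <= t / 4) by apply Rmin_r.
  assert (Hk1 : kf t e1 < r).
  { assert (Rabs (e1 - 0) < d) by (rewrite Rminus_0_r, Rabs_pos_eq by lra; assert (e1 <= d/2) by apply Rmin_l; lra).
    specialize (Hd2 _ H). rewrite Hk0, Rminus_0_r in Hd2. apply Rabs_def2 in Hd2. lra. }
  set (d2 := Rmin (t / 2) (t / (2 * (r + 1)))).
  assert (Hd2p : 0 < d2) by (apply Rmin_pos; [lra| apply Rdiv_lt_0_compat; lra]).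
  assert (Hd2a : d2 <= t / 2) by apply Rmin_l.
  assert (Hd2b : d2 <= t / (2 * (r + 1))) by apply Rmin_r.
  set (e2 := t - d2).
  assert (Hk2 : r < kf t e2).
  { unfold kf. replace (t - e2) with d2 by (unfold e2; ring).
    assert (Hs : 0 < sin d2) by (apply sin_pos_int; lra).
    assert (Hsl : sin d2 <= d2) by (left; apply sin_lt_x; auto).
    assert (Hc : 0 < cos d2) by (apply cos_gt_0; pose proof PI_RGT_0; lra).
    assert (1 <= exp (e2 * cos d2 / sin d2)).
    { rewrite <- exp_0. destruct (Req_dec (e2 * cos d2 / sin d2) 0) as [->|]; [lra|].
      left. apply exp_increasing. apply Rdiv_lt_0_compat; auto. apply Rmult_lt_0_compat; auto. unfold e2; lra. }
    assert (r + 1 <= e2 / sin d2).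
    { apply (Rmult_le_reg_r (sin d2)); auto. unfold Rdiv. rewrite Rmult_assoc, Rinv_l by lra.
      rewrite Rmult_1_r. apply Rle_trans with ((r + 1) * d2); [apply Rmult_le_compat_l; lra|].
      assert ((r + 1) * d2 <= (r + 1) * (t / (2 * (r + 1)))) by (apply Rmult_le_compat_l; lra).
      assert ((r + 1) * (t / (2 * (r + 1))) = t / 2) by (field; lra).
      unfold e2; lra. }
    assert (0 < e2 / sin d2) by lra. nra. }
  assert (He12 : e1 < e2) by (unfold e2; lra).
  destruct (Ranalysis5.IVT_interv (fun e => kf t e - r) e1 e2) as [e [He Hke]].
  - intros a Ha. apply continuity_pt_minus; [apply kf_cont_e; unfold e2 in *; lra| apply continuity_pt_const; intros u v; auto].
  - auto.
  - lra.
  - lra.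
  - exists e. split; [unfold e2 in He; lra| lra].
Qed.

Definition thC (z : C) := acos (fst z / Cmod z).
Definition etaH (z : C) := epsilon (inhabits 0) (fun e => 0 < e < thC z /\ kf (thC z) e = Cmod z).
Definition xiH (z : C) := etaH z * cos (thC z - etaH z) / sin (thC z - etaH z).
Definition FH (z : C) : C := (xiH z, etaH z).

Lemma Cmod_pos_im z : 0 < snd z -> 0 < Cmod z.
Proof. intros H. pose proof (Cmod_snd z). pose proof (Rabs_pos (snd z)). rewrite Rabs_pos_eq in H0; lra. Qed.

Lemma Cmod_sq z : Cmod z ^ 2 = fst z ^ 2 + snd z ^ 2.
Proof. apply Cmod2_alt. Qed.

Lemma ratio_bound z : 0 < snd z -> -1 < fst z / Cmod z < 1.
Proof.
  intros H. pose proof (Cmod_pos_im z H) as Hr. pose proof (Cmod_sq z) as E.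
  assert (fst z ^ 2 < Cmod z ^ 2) by (assert (0 < snd z ^ 2) by (apply pow_lt; auto); lra).
  assert (Rabs (fst z) < Cmod z).
  { destruct (Rlt_le_dec (Rabs (fst z)) (Cmod z)); auto.
    assert (Cmod z ^ 2 <= Rabs (fst z) ^ 2) by (apply pow_incr; lra).
    replace (Rabs (fst z) ^ 2) with (fst z ^ 2) in H1 by (unfold Rabs; destruct Rcase_abs; ring). lra. }
  split.
  - apply (Rmult_lt_reg_r (Cmod z)); auto. unfold Rdiv. rewrite Rmult_assoc, Rinv_l by lra.
    unfold Rabs in H1; destruct (Rcase_abs (fst z)); lra.
  - apply (Rmult_lt_reg_r (Cmod z)); auto. unfold Rdiv. rewrite Rmult_assoc, Rinv_l by lra.
    unfold Rabs in H1; destruct (Rcase_abs (fst z)); lra.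
Qed.

Lemma sq_ratio x y r : r <> 0 -> r ^ 2 = x ^ 2 + y ^ 2 -> (y / r) ^ 2 = 1 - (x / r) * (x / r).
Proof.
  intros Hr E. assert (y ^ 2 = r ^ 2 - x ^ 2) by lra.
  replace ((y / r) ^ 2) with (y ^ 2 / r ^ 2) by (field; auto). rewrite H. field; auto.
Qed.

Lemma th_bounds z : 0 < snd z -> 0 < thC z < PI.
Proof. intros H. unfold thC. apply acos_bound_lt. apply ratio_bound; auto. Qed.

Lemma cos_th z : 0 < snd z -> cos (thC z) = fst z / Cmod z.
Proof. intros H. unfold thC. apply cos_acos. pose proof (ratio_bound z H). lra. Qed.

Lemma sin_th z : 0 < snd z -> sin (thC z) = snd z / Cmod z.
Proof.
  intros H. pose proof (ratio_bound z H). pose proof (Cmod_pos_im z H). unfold thC.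
  rewrite sin_acos by lra.
  replace (1 - (fst z / Cmod z)²) with ((snd z / Cmod z) ^ 2).
  - apply sqrt_pow2. apply Rlt_le, Rdiv_lt_0_compat; auto.
  - pose proof (Cmod_sq z). unfold Rsqr. apply sq_ratio; lra.
Qed.

Lemma eta_spec z : 0 < snd z -> 0 < etaH z < thC z /\ kf (thC z) (etaH z) = Cmod z.
Proof.
  intros H. unfold etaH. apply epsilon_spec. destruct (th_bounds z H).
  apply kf_exists; auto. apply Cmod_pos_im; auto.
Qed.

Lemma Gc_FH z : 0 < snd z -> Gc (FH z) = z.
Proof.
  intros H. destruct (eta_spec z H) as [[He1 He2] Hk]. destruct (th_bounds z H) as [Ht1 Ht2].
  pose proof (cos_th z H) as Ec. pose proof (sin_th z H) as Es. pose proof (Cmod_pos_im z H) as Hr.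
  set (t := thC z) in *. set (e := etaH z) in *.
  assert (Hs : 0 < sin (t - e)) by (apply sin_pos_int; lra).
  assert (Ht : t = (t - e) + e) by ring.
  assert (Ec2 : cos t = cos (t - e) * cos e - sin (t - e) * sin e) by (rewrite Ht at 1; apply cos_plus).
  assert (Es2 : sin t = sin (t - e) * cos e + cos (t - e) * sin e) by (rewrite Ht at 1; apply sin_plus).
  unfold kf in Hk.
  assert (Ex : fst z = Cmod z * cos t) by (rewrite Ec; field; lra).
  assert (Ey : snd z = Cmod z * sin t) by (rewrite Es; field; lra).
  unfold Gc, FH, xiH, Cexp, Cmult; simpl. fold t e.
  destruct z as [x y]. simpl in *. f_equal.
  - rewrite Ex, Ec2, <- Hk. field. lra.
  - rewrite Ey, Es2, <- Hk. field. lra.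
Qed.

Definition ctsC (f : C -> R) (z0 : C) := forall e, 0 < e -> exists d, 0 < d /\
  forall z, Cmod (z - z0) < d -> Rabs (f z - f z0) < e.

Lemma ctsC_ext f g z0 : (forall z, f z = g z) -> ctsC f z0 -> ctsC g z0.
Proof.
  intros E H e He. destruct (H e He) as [d [Hd H2]]. exists d; split; auto.
  intros z Hz. rewrite <- !E. auto.
Qed.

Lemma ctsC_const c z0 : ctsC (fun _ => c) z0.
Proof. intros e He. exists 1. split; [lra|]. intros. rewrite Rminus_diag, Rabs_R0. auto. Qed.

Lemma ctsC_fst z0 : ctsC (fun z => fst z) z0.
Proof.
  intros e He. exists e. split; auto. intros z Hz. eapply Rle_lt_trans; [|apply Hz].
  apply (Cmod_fst (z - z0)%C).
Qed.

Lemma ctsC_snd z0 : ctsC (fun z => snd z) z0.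
Proof.
  intros e He. exists e. split; auto. intros z Hz. eapply Rle_lt_trans; [|apply Hz].
  apply (Cmod_snd (z - z0)%C).
Qed.

Lemma Cmod_rev z z0 : Rabs (Cmod z - Cmod z0) <= Cmod (z - z0).
Proof.
  pose proof (Cmod_triangle (z - z0) z0). replace (z - z0 + z0)%C with z in H by ring.
  pose proof (Cmod_triangle (z0 - z) z). replace (z0 - z + z)%C with z0 in H0 by ring.
  replace (z0 - z)%C with (- (z - z0))%C in H0 by ring. rewrite Cmod_opp in H0.
  apply Rabs_le. lra.
Qed.

Lemma ctsC_Cmod z0 : ctsC Cmod z0.
Proof.
  intros e He. exists e. split; auto. intros z Hz. eapply Rle_lt_trans; [apply Cmod_rev|]. auto.
Qed.

Lemma ctsC_comp (g : R -> R) f z0 : continuity_pt g (f z0) -> ctsC f z0 -> ctsC (fun z => g (f z)) z0.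
Proof.
  intros Hg Hf e He. destruct (cpt_eps g (f z0) Hg e He) as [d1 [Hd1 H1]].
  destruct (Hf d1 Hd1) as [d2 [Hd2 H2]]. exists d2. split; auto.
Qed.

Lemma ctsC_plus f g z0 : ctsC f z0 -> ctsC g z0 -> ctsC (fun z => f z + g z) z0.
Proof.
  intros Hf Hg e He. destruct (Hf (e/2)) as [d1 [Hd1 H1]]; [lra|].
  destruct (Hg (e/2)) as [d2 [Hd2 H2]]; [lra|].
  exists (Rmin d1 d2). split; [apply Rmin_pos; auto|]. intros z Hz.
  specialize (H1 z ltac:(pose proof (Rmin_l d1 d2); lra)). specialize (H2 z ltac:(pose proof (Rmin_r d1 d2); lra)).
  replace (f z + g z - (f z0 + g z0)) with ((f z - f z0) + (g z - g z0)) by ring.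
  eapply Rle_lt_trans; [apply Rabs_triang|]. lra.
Qed.

Lemma ctsC_opp f z0 : ctsC f z0 -> ctsC (fun z => - f z) z0.
Proof.
  intros Hf. apply (ctsC_comp (fun u => - u)); auto. apply exd_cpt. auto_derive. auto.
Qed.

Lemma ctsC_minus f g z0 : ctsC f z0 -> ctsC g z0 -> ctsC (fun z => f z - g z) z0.
Proof. intros Hf Hg. apply ctsC_plus; auto. apply ctsC_opp; auto. Qed.

Lemma ctsC_mult f g z0 : ctsC f z0 -> ctsC g z0 -> ctsC (fun z => f z * g z) z0.
Proof.
  intros Hf Hg.
  apply (ctsC_ext (fun z => ((f z + g z) ^ 2 - (f z - g z) ^ 2) / 4)); [intros; field|].
  apply (ctsC_comp (fun u => u / 4) (fun z => (f z + g z) ^ 2 - (f z - g z) ^ 2)).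
  { apply exd_cpt. auto_derive. auto. }
  apply ctsC_minus.
  - apply (ctsC_comp (fun u => u ^ 2)); [apply exd_cpt; auto_derive; auto| apply ctsC_plus; auto].
  - apply (ctsC_comp (fun u => u ^ 2)); [apply exd_cpt; auto_derive; auto| apply ctsC_minus; auto].
Qed.

Lemma ctsC_th z0 : 0 < snd z0 -> ctsC thC z0.
Proof.
  intros H. unfold thC. pose proof (ratio_bound z0 H). pose proof (Cmod_pos_im z0 H).
  apply (ctsC_comp acos (fun z => fst z / Cmod z)).
  - apply derivable_continuous_pt. apply derivable_pt_acos. auto.
  - apply ctsC_mult; [apply ctsC_fst|].
    apply (ctsC_comp Rinv Cmod); [|apply ctsC_Cmod].
    apply exd_cpt. auto_derive. lra.
Qed.

Lemma near_im z0 : 0 < snd z0 -> forall z, Cmod (z - z0) < snd z0 -> 0 < snd z.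
Proof.
  intros H z Hz. pose proof (Cmod_snd (z - z0)%C). simpl in H0.
  assert (Rabs (snd z + - snd z0) < snd z0) by lra. apply Rabs_def2 in H1. lra.
Qed.

Lemma ctsC_eta z0 : 0 < snd z0 -> ctsC etaH z0.
Proof.
  intros H0 e He.
  destruct (eta_spec z0 H0) as [[Hn1 Hn2] Hk0]. destruct (th_bounds z0 H0) as [Ht1 Ht2].
  set (t0 := thC z0) in *. set (n0 := etaH z0) in *. set (r0 := Cmod z0) in *.
  set (e1 := Rmin (e / 2) (Rmin (n0 / 2) ((t0 - n0) / 2))).
  assert (He1 : 0 < e1) by (apply Rmin_pos; [lra| apply Rmin_pos; lra]).
  assert (He1a : e1 <= e / 2) by apply Rmin_l.
  assert (He1b : e1 <= n0 / 2) by (eapply Rle_trans; [apply Rmin_r| apply Rmin_l]).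
  assert (He1c : e1 <= (t0 - n0) / 2) by (eapply Rle_trans; [apply Rmin_r| apply Rmin_r]).
  set (a := n0 - e1). set (b := n0 + e1).
  assert (Ka : kf t0 a < r0) by (rewrite <- Hk0; apply kf_incr; unfold a, b in *; lra).
  assert (Kb : r0 < kf t0 b) by (rewrite <- Hk0; apply kf_incr; unfold a, b in *; lra).
  set (g := Rmin (r0 - kf t0 a) (Rmin (kf t0 b - r0) (t0 - b)) / 2).
  assert (Hg : 0 < g) by (unfold g; apply Rdiv_lt_0_compat; [apply Rmin_pos; [lra|apply Rmin_pos; unfold b in *; lra]|lra]).
  assert (Hg1 : 2 * g <= r0 - kf t0 a) by (unfold g; pose proof (Rmin_l (r0 - kf t0 a) (Rmin (kf t0 b - r0) (t0 - b))); lra).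
  assert (Hg2 : 2 * g <= kf t0 b - r0) by (unfold g; pose proof (Rmin_r (r0 - kf t0 a) (Rmin (kf t0 b - r0) (t0 - b)));
     pose proof (Rmin_l (kf t0 b - r0) (t0 - b)); lra).
  assert (Hg3 : g < t0 - b) by (unfold g; pose proof (Rmin_r (r0 - kf t0 a) (Rmin (kf t0 b - r0) (t0 - b)));
     pose proof (Rmin_r (kf t0 b - r0) (t0 - b)); unfold b in *; lra).
  assert (Ca : ctsC (fun z => kf (thC z) a) z0).
  { apply (ctsC_comp (fun s => kf s a) thC). apply kf_cont_t. unfold a in *; fold t0; lra. apply ctsC_th; auto. }
  assert (Cb : ctsC (fun z => kf (thC z) b) z0).
  { apply (ctsC_comp (fun s => kf s b) thC). apply kf_cont_t. unfold b in *; fold t0; lra. apply ctsC_th; auto. }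
  destruct (Ca g Hg) as [da [Hda Ha]]. destruct (Cb g Hg) as [db [Hdb Hb]].
  destruct (ctsC_th z0 H0 g Hg) as [dt [Hdt Ht]].
  set (d := Rmin (Rmin da db) (Rmin dt (Rmin g (snd z0)))).
  assert (Hd : 0 < d) by (apply Rmin_pos; apply Rmin_pos; auto; apply Rmin_pos; auto).
  exists d. split; auto. intros z Hz.
  assert (Hza : Cmod (z - z0) < da) by (unfold d in Hz; pose proof (Rmin_l (Rmin da db) (Rmin dt (Rmin g (snd z0))));
    pose proof (Rmin_l da db); lra).
  assert (Hzb : Cmod (z - z0) < db) by (unfold d in Hz; pose proof (Rmin_l (Rmin da db) (Rmin dt (Rmin g (snd z0))));
    pose proof (Rmin_r da db); lra).
  assert (Hzt : Cmod (z - z0) < dt) by (unfold d in Hz; pose proof (Rmin_r (Rmin da db) (Rmin dt (Rmin g (snd z0))));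
    pose proof (Rmin_l dt (Rmin g (snd z0))); lra).
  assert (Hzg : Cmod (z - z0) < g) by (unfold d in Hz; pose proof (Rmin_r (Rmin da db) (Rmin dt (Rmin g (snd z0))));
    pose proof (Rmin_r dt (Rmin g (snd z0))); pose proof (Rmin_l g (snd z0)); lra).
  assert (Hzs : Cmod (z - z0) < snd z0) by (unfold d in Hz; pose proof (Rmin_r (Rmin da db) (Rmin dt (Rmin g (snd z0))));
    pose proof (Rmin_r dt (Rmin g (snd z0))); pose proof (Rmin_r g (snd z0)); lra).
  specialize (Ha z Hza). specialize (Hb z Hzb). specialize (Ht z Hzt).
  pose proof (Cmod_rev z z0) as Hr. fold r0 in Hr.
  assert (Hpos : 0 < snd z) by (apply (near_im z0); auto).
  destruct (eta_spec z Hpos) as [[Hm1 Hm2] Hkz].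
  destruct (th_bounds z Hpos) as [Htz1 Htz2].
  apply Rabs_def2 in Ha. apply Rabs_def2 in Hb. apply Rabs_def2 in Ht.
  assert (Hrz : Rabs (Cmod z - r0) < g) by lra. apply Rabs_def2 in Hrz.
  fold t0 in Ht, Ha, Hb. fold n0.
  assert (HbT : b < thC z) by lra.
  assert (a < etaH z).
  { destruct (Rlt_le_dec a (etaH z)) as [|Hle]; auto.
    assert (kf (thC z) (etaH z) <= kf (thC z) a).
    { apply kf_le; [lra|exact Hm1|exact Hle|]. unfold a, b in *. lra. }
    lra. }
  assert (etaH z < b).
  { destruct (Rlt_le_dec (etaH z) b) as [|Hle]; auto.
    assert (kf (thC z) b <= kf (thC z) (etaH z)).
    { apply kf_le; [lra| |exact Hle|exact Hm2]. unfold a, b in *. lra. }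
    lra. }
  apply Rabs_def1; unfold a, b in *; lra.
Qed.

Lemma ctsC_xi z0 : 0 < snd z0 -> ctsC xiH z0.
Proof.
  intros H0. destruct (eta_spec z0 H0) as [[Hn1 Hn2] Hk0]. destruct (th_bounds z0 H0) as [Ht1 Ht2].
  apply (ctsC_ext (fun z => etaH z * (fun u => cos u / sin u) (thC z - etaH z))); [intros; unfold xiH; simpl; unfold Rdiv; ring|].
  apply ctsC_mult; [apply ctsC_eta; auto|].
  apply (ctsC_comp (fun u => cos u / sin u) (fun z => thC z - etaH z)).
  - apply exd_cpt. auto_derive. apply Rgt_not_eq, sin_pos_int; lra.
  - apply ctsC_minus; [apply ctsC_th| apply ctsC_eta]; auto.
Qed.

Lemma FH_cont z0 : 0 < snd z0 -> forall e, 0 < e -> exists d, 0 < d /\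
  forall z, Cmod (z - z0) < d -> Cmod (FH z - FH z0) < e.
Proof.
  intros H0 e He. destruct (ctsC_xi z0 H0 (e/2)) as [d1 [Hd1 H1]]; [lra|].
  destruct (ctsC_eta z0 H0 (e/2)) as [d2 [Hd2 H2]]; [lra|].
  exists (Rmin d1 d2). split; [apply Rmin_pos; auto|]. intros z Hz.
  specialize (H1 z ltac:(pose proof (Rmin_l d1 d2); lra)). specialize (H2 z ltac:(pose proof (Rmin_r d1 d2); lra)).
  eapply Rle_lt_trans; [apply Cmod_le_sum|]. unfold FH; simpl.
  replace (xiH z + - xiH z0) with (xiH z - xiH z0) by ring.
  replace (etaH z + - etaH z0) with (etaH z - etaH z0) by ring. lra.
Qed.

Lemma Cmod_Gc w : Cmod (Gc w) = Cmod w * exp (fst w).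
Proof. unfold Gc. rewrite Cmod_mult, Cmod_Cexp. auto. Qed.

Lemma FH_near z : 0 < snd z -> 0 < fst z ->
  0 < xiH z /\ etaH z < 3 * snd z / Cmod z /\ Rabs (xiH z - lambertW (Cmod z)) <= etaH z.
Proof.
  intros Hy Hx. destruct (eta_spec z Hy) as [[He1 He2] Hk]. destruct (th_bounds z Hy) as [Ht1 Ht2].
  pose proof (cos_th z Hy) as Ec. pose proof (sin_th z Hy) as Es. pose proof (Cmod_pos_im z Hy) as Hr.
  pose proof PI2_3_2 as HPI. pose proof PI_4 as HPI4.
  set (t := thC z) in *. set (e := etaH z) in *.
  assert (Hc : 0 < cos t) by (rewrite Ec; apply Rdiv_lt_0_compat; auto).
  assert (Ht3 : t < PI / 2).
  { destruct (Rlt_le_dec t (PI/2)) as [|Hle]; auto. destruct Hle as [Hlt|Heq].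
    - assert (cos t < 0) by (apply cos_lt_0; lra). lra.
    - rewrite <- Heq, cos_PI2 in Hc. lra. }
  assert (Hsin : t / 3 <= sin t).
  { destruct (sin_bound t 0) as [H1 _]; [lra|lra|]. unfold sin_approx, sin_term in H1. simpl in H1.
    assert (t * t <= 4) by nra. nra. }
  assert (Hxi : 0 < xiH z).
  { unfold xiH. fold t e. apply Rdiv_lt_0_compat; [apply Rmult_lt_0_compat; auto; apply cos_gt_0; lra|].
    apply sin_pos_int; lra. }
  split; [auto|split].
  - assert (e < 3 * sin t) by lra. rewrite Es in H. unfold Rdiv in *. lra.
  - pose proof (Gc_FH z Hy) as EG. pose proof (Cmod_Gc (FH z)) as Em. rewrite EG in Em.
    unfold FH in Em; simpl in Em. fold e in Em. set (xi := xiH z) in *.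
    assert (Hm : Cmod (xi, e) = sqrt (xi ^ 2 + e ^ 2)) by reflexivity.
    assert (Hm1 : xi <= Cmod (xi, e)) by (pose proof (Cmod_fst (xi, e)); simpl in H; rewrite Rabs_pos_eq in H; lra).
    assert (Hm2 : Cmod (xi, e) <= xi + e).
    { eapply Rle_trans; [apply Cmod_le_sum|]. simpl. rewrite !Rabs_pos_eq; lra. }
    pose proof (exp_pos xi).
    assert (L1 : xi <= lambertW (Cmod z)).
    { apply W_le; auto; [lra|]. unfold gw. rewrite Em. apply Rmult_le_compat_r; lra. }
    assert (L2 : lambertW (Cmod z) <= xi + e).
    { apply W_ge; auto; [lra|]. unfold gw. rewrite Em. rewrite exp_plus.
      assert (1 <= exp e) by (pose proof (exp_ineq1_le e); lra).
      assert (Cmod (xi, e) * exp xi <= (xi + e) * exp xi) by (apply Rmult_le_compat_r; lra).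
      assert ((xi + e) * exp xi <= (xi + e) * (exp xi * exp e)) by (apply Rmult_le_compat_l; nra).
      lra. }
    apply Rabs_le. lra.
Qed.

Definition Fw (z : C) : C :=
  match Rlt_dec 0 (snd z) with
  | left _ => FH z
  | right _ => match Rlt_dec (snd z) 0 with
               | left _ => Cconj (FH (Cconj z))
               | right _ => RtoC (lambertW (fst z))
               end
  end.

Definition Uw (z : C) : Prop := 0 < snd z \/ snd z < 0 \/ 0 < fst z.

Lemma Fw_up z : 0 < snd z -> Fw z = FH z.
Proof. intros H. unfold Fw. destruct (Rlt_dec 0 (snd z)); [auto|lra]. Qed.

Lemma Fw_down z : snd z < 0 -> Fw z = Cconj (FH (Cconj z)).
Proof. intros H. unfold Fw. destruct (Rlt_dec 0 (snd z)); [lra|]. destruct (Rlt_dec (snd z) 0); [auto|lra]. Qed.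

Lemma Fw_real z : snd z = 0 -> Fw z = RtoC (lambertW (fst z)).
Proof. intros H. unfold Fw. destruct (Rlt_dec 0 (snd z)); [lra|]. destruct (Rlt_dec (snd z) 0); [lra|auto]. Qed.

Lemma Cexp_conj w : Cexp (Cconj w) = Cconj (Cexp w).
Proof. destruct w as [a b]. unfold Cexp, Cconj; simpl. rewrite cos_neg, sin_neg. f_equal. ring. Qed.

Lemma Gc_conj w : Gc (Cconj w) = Cconj (Gc w).
Proof. unfold Gc. rewrite Cexp_conj. destruct w as [a b]. destruct (Cexp (a, b)) as [c d].
  unfold Cconj, Cmult; simpl. f_equal; ring. Qed.

Lemma Cconj_inv z : Cconj (Cconj z) = z.
Proof. destruct z; unfold Cconj; simpl. f_equal; ring. Qed.

Lemma Cmod_conj_diff z w : Cmod (Cconj z - Cconj w) = Cmod (z - w).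
Proof.
  replace (Cconj z - Cconj w)%C with (Cconj (z - w)) by (destruct z, w; unfold Cconj, Cminus, Cplus, Copp; simpl; f_equal; ring).
  apply Cmod_conj.
Qed.

Lemma Gc_Fw z : Uw z -> Gc (Fw z) = z.
Proof.
  intros [H|[H|H]].
  - rewrite Fw_up; auto. apply Gc_FH; auto.
  - rewrite Fw_down; auto. rewrite Gc_conj, Gc_FH, Cconj_inv; auto.
    destruct z; simpl in *; lra.
  - destruct (Rlt_dec 0 (snd z)). rewrite Fw_up; auto. apply Gc_FH; auto.
    destruct (Rlt_dec (snd z) 0). rewrite Fw_down; auto. rewrite Gc_conj, Gc_FH, Cconj_inv; auto.
    destruct z; simpl in *; lra.
    assert (E : snd z = 0) by lra. rewrite Fw_real; auto.
    pose proof (W_eq (fst z) H) as EW. unfold gw in EW.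
    destruct z as [x y]. simpl in *. subst y. unfold Gc, Cexp, Cmult, RtoC; simpl.
    rewrite cos_0, sin_0. f_equal; [transitivity (lambertW x * exp (lambertW x)); [ring|exact EW]|ring].
Qed.

Lemma Uw_loc z0 : Uw z0 -> exists d, 0 < d /\ forall z, Cmod (z - z0) < d -> Uw z.
Proof.
  intros [H|[H|H]].
  - exists (snd z0). split; auto. intros z Hz. left. apply (near_im z0); auto.
  - exists (- snd z0). split; [lra|]. intros z Hz. right; left.
    pose proof (Cmod_snd (z - z0)%C). simpl in H0. assert (Rabs (snd z + - snd z0) < - snd z0) by lra.
    apply Rabs_def2 in H1. lra.
  - exists (fst z0). split; auto. intros z Hz. right; right.
    pose proof (Cmod_fst (z - z0)%C). simpl in H0. assert (Rabs (fst z + - fst z0) < fst z0) by lra.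
    apply Rabs_def2 in H1. lra.
Qed.

Lemma Uw_open : open Uw.
Proof.
  intros z Hz. apply locC. apply Uw_loc; auto.
Qed.

Lemma upper_near x0 : 0 < x0 -> forall e, 0 < e -> exists d, 0 < d /\ forall z, 0 < snd z ->
  Cmod (z - RtoC x0) < d -> Cmod (FH z - RtoC (lambertW x0)) < e.
Proof.
  intros Hx0 e He. destruct (W_cont x0 Hx0 (e/2)) as [dW [HdW HW]]; [lra|].
  set (d := Rmin (x0 / 2) (Rmin dW (e * x0 / 32))).
  assert (Hd : 0 < d) by (apply Rmin_pos; [lra|apply Rmin_pos; auto; assert (0 < e * x0) by (apply Rmult_lt_0_compat; auto); lra]).
  exists d. split; auto. intros z Hy Hz.
  assert (Hd1 : d <= x0 / 2) by apply Rmin_l.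
  assert (Hd2 : d <= dW) by (eapply Rle_trans; [apply Rmin_r|apply Rmin_l]).
  assert (Hd3 : d <= e * x0 / 32) by (eapply Rle_trans; [apply Rmin_r|apply Rmin_r]).
  pose proof (Cmod_fst (z - RtoC x0)%C) as Hf. pose proof (Cmod_snd (z - RtoC x0)%C) as Hs.
  pose proof (Cmod_rev z (RtoC x0)) as Hr. rewrite Cmod_R, (Rabs_pos_eq x0) in Hr by lra.
  simpl in Hf, Hs. replace (snd z + - 0) with (snd z) in Hs by ring. rewrite Rabs_pos_eq in Hs by lra.
  assert (Hfx : Rabs (fst z + - x0) < x0 / 2) by lra. apply Rabs_def2 in Hfx.
  assert (Hrx : Rabs (Cmod z - x0) < x0 / 2) by lra. apply Rabs_def2 in Hrx.
  assert (Hfz : 0 < fst z) by lra.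
  destruct (FH_near z Hy Hfz) as [Hxi [Heta Hsq]].
  destruct (HW (Cmod z)) as [_ HW2]; [lra|].
  destruct (eta_spec z Hy) as [[He1 _] _].
  assert (Hr0 : 0 < Cmod z) by lra.
  assert (Hn : etaH z * Cmod z < 3 * snd z).
  { apply (Rmult_lt_reg_r (/ Cmod z)); [apply Rinv_0_lt_compat; auto|].
    rewrite Rmult_assoc, Rinv_r, Rmult_1_r by lra. unfold Rdiv in Heta. lra. }
  assert (Hn2 : etaH z < 3 * e / 16).
  { assert (etaH z * (x0 / 2) < etaH z * Cmod z) by (apply Rmult_lt_compat_l; lra).
    assert (etaH z * (x0 / 2) < 3 * (e * x0 / 32)) by lra.
    assert (etaH z * x0 < 3 * e / 16 * x0) by lra.
    apply (Rmult_lt_reg_r x0); auto. }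
  eapply Rle_lt_trans; [apply Cmod_le_sum|]. unfold FH; simpl.
  replace (etaH z + - 0) with (etaH z) by ring. rewrite (Rabs_pos_eq (etaH z)) by lra.
  replace (xiH z + - lambertW x0) with ((xiH z - lambertW (Cmod z)) + (lambertW (Cmod z) - lambertW x0)) by ring.
  pose proof (Rabs_triang (xiH z - lambertW (Cmod z)) (lambertW (Cmod z) - lambertW x0)). lra.
Qed.

Lemma Cconj_R a : Cconj (RtoC a) = RtoC a.
Proof. unfold Cconj, RtoC; simpl. f_equal. ring. Qed.

Lemma Cmod_RR a b : Cmod (RtoC a - RtoC b) = Rabs (a - b).
Proof. replace (RtoC a - RtoC b)%C with (RtoC (a - b)) by (unfold RtoC, Cminus, Cplus, Copp; simpl; f_equal; ring).
  apply Cmod_R. Qed.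

Lemma Fw_cont z0 : Uw z0 -> forall e, 0 < e -> exists d, 0 < d /\
  forall z, Cmod (z - z0) < d -> Cmod (Fw z - Fw z0) < e.
Proof.
  intros HU e He.
  destruct (Rlt_dec 0 (snd z0)) as [Hp|Hp].
  - destruct (FH_cont z0 Hp e He) as [d [Hd H]].
    exists (Rmin d (snd z0)). split; [apply Rmin_pos; auto|]. intros z Hz.
    rewrite (Fw_up z0), (Fw_up z); auto.
    + apply H. pose proof (Rmin_l d (snd z0)); lra.
    + apply (near_im z0); auto. pose proof (Rmin_r d (snd z0)); lra.
  - destruct (Rlt_dec (snd z0) 0) as [Hn|Hn].
    + assert (Hc : 0 < snd (Cconj z0)) by (destruct z0; simpl in *; lra).
      destruct (FH_cont (Cconj z0) Hc e He) as [d [Hd H]].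
      exists (Rmin d (- snd z0)). split; [apply Rmin_pos; lra|]. intros z Hz.
      assert (Hzn : snd z < 0).
      { pose proof (Cmod_snd (z - z0)%C). simpl in H0. pose proof (Rmin_r d (- snd z0)).
        assert (Rabs (snd z + - snd z0) < - snd z0) by lra. apply Rabs_def2 in H2. lra. }
      rewrite (Fw_down z0), (Fw_down z); auto. rewrite Cmod_conj_diff. apply H.
      rewrite Cmod_conj_diff. pose proof (Rmin_l d (- snd z0)); lra.
    + destruct HU as [H|[H|H]]; [lra|lra|].
      assert (Hs0 : snd z0 = 0) by lra.
      destruct z0 as [x0 y0]. simpl in Hs0, H. subst y0.
      change (x0, 0) with (RtoC x0).
      rewrite Fw_real by reflexivity. simpl.
      destruct (upper_near x0 H e He) as [d1 [Hd1 H1]].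
      destruct (W_cont x0 H e He) as [d2 [Hd2 H2]].
      exists (Rmin d1 d2). split; [apply Rmin_pos; auto|]. intros z Hz.
      assert (Hz1 : Cmod (z - RtoC x0) < d1) by (pose proof (Rmin_l d1 d2); lra).
      assert (Hz2 : Cmod (z - RtoC x0) < d2) by (pose proof (Rmin_r d1 d2); lra).
      destruct (Rlt_dec 0 (snd z)) as [Hzp|Hzp].
      * rewrite Fw_up by auto. apply H1; auto.
      * destruct (Rlt_dec (snd z) 0) as [Hzn|Hzn].
        -- rewrite Fw_down by auto. rewrite <- (Cconj_R (lambertW x0)). rewrite Cmod_conj_diff.
           apply H1. destruct z; simpl in *; lra.
           rewrite <- (Cconj_R x0), Cmod_conj_diff. auto.
        -- rewrite Fw_real by lra. rewrite Cmod_RR. apply H2.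
           pose proof (Cmod_fst (z - RtoC x0)%C). simpl in H0. unfold Rminus. lra.
Qed.

Lemma Fw_nm1 z : Uw z -> snd (Fw z) <> 0 \/ 0 < fst (Fw z).
Proof.
  intros HU. destruct (Rlt_dec 0 (snd z)) as [Hp|Hp].
  - left. rewrite Fw_up by auto. unfold FH; simpl. destruct (eta_spec z Hp) as [[H1 _] _]. lra.
  - destruct (Rlt_dec (snd z) 0) as [Hn|Hn].
    + left. rewrite Fw_down by auto. change (snd (Cconj (FH (Cconj z)))) with (- etaH (Cconj z)).
      assert (Hc : 0 < snd (Cconj z)) by (destruct z; simpl in *; lra).
      destruct (eta_spec _ Hc) as [[H1 _] _]. lra.
    + right. destruct HU as [H|[H|H]]; [lra|lra|]. rewrite Fw_real by lra. simpl. apply W_pos; auto.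
Qed.

Lemma Fw_derive z0 : Uw z0 -> @ex_derive C_AbsRing C_NormedModule Fw z0.
Proof.
  intros HU. eexists. apply (inv_deriv_C Fw Gc z0 ((1 + Fw z0) * Cexp (Fw z0))%C).
  - intros E. apply (f_equal Cmod) in E. rewrite Cmod_mult, Cmod_Cexp, Cmod_0 in E.
    pose proof (exp_pos (fst (Fw z0))).
    assert (Cmod (1 + Fw z0)%C = 0) by (apply Rmult_integral in E; destruct E; lra).
    apply Cmod_eq_0 in H0. apply (f_equal fst) in H0 as H1. apply (f_equal snd) in H0 as H2.
    simpl in H1, H2. destruct (Fw_nm1 z0 HU); lra.
  - apply Gc_eps.
  - apply Fw_cont; auto.
  - destruct (Uw_loc z0 HU) as [d [Hd H]]. exists d. split; auto. intros z Hz. apply Gc_Fw. auto.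
Qed.

Theorem mainTheorem11 : complete_bernstein lambertW.
Proof.
  split; [apply W_bernstein|].
  exists Uw, Fw. split; [|split; [|split; [|split; [|split]]]].
  - apply Uw_open.
  - intros z Hz. left. exact Hz.
  - intros x Hx. right; right. simpl. auto.
  - intros z Hz. apply Fw_derive; auto.
  - intros x Hx. rewrite Fw_real by reflexivity. reflexivity.
  - intros z Hz. unfold upper_half_plane in *. rewrite Fw_up by auto. unfold FH; simpl.
    destruct (eta_spec z Hz) as [[H1 _] _]. auto.
Qed.
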